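(* Let $n\ge 1$, let $c\in\mathbb{R}^n$ with $c_1\ge c_2\ge\cdots\ge c_n\ge 0$, and let $u\in\mathbb{R}^n$ with $u_i>0$ for all $i$. Let $f(x)=\frac12\left(\sum_{i=1}^n x_i\right)^2-\sum_{i=1}^n c_ix_i$. For $k=0,1,\dots,n$ let $U_k=\sum_{i=1}^k u_i$ (so $U_0=0$) and let $x^{(k)}\in\mathbb{R}^n$ be the vector with $x^{(k)}_i=u_i$ for $i\le k$ and $x^{(k)}_i=0$ for $i>k$ (so $x^{(0)}=0$). For $k=1,\dots,n$ let \[ G_k=\tfrac12\left(U_k+U_{k-1}\right)-c_k=U_{k-1}+\tfrac12u_k-c_k . \] Then: (i) If $\bar n$ is the smallest index in $\{1,\dots,n\}$ such that $G_{\bar n}\ge 0$, then $\min_{i=0,1,\dots,n} f(x^{(i)})=f(x^{(\bar n-1)})$. (ii) If $G_k<0$ for all $k=1,\dots,n$, then $\min_{i=0,1,\dots,n} f(x^{(i)})=f(x^{(n)})$.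
   Context: The vectors $x^{(k)}$ fill the coordinates $1,\dots,k$ to their upper bounds $u_i$ and leave the rest at $0$. *)

(* Defs.v *)
From mathcomp Require Import all_boot all_order all_algebra.
Set Implicit Arguments. Unset Strict Implicit. Unset Printing Implicit Defensive.
Import Order.TTheory GRing.Theory Num.Theory.
Local Open Scope ring_scope.

(* Vectors in R^n are represented as functions nat -> R, with coordinates
   indexed 1..n (as in the paper); values outside 1..n are irrelevant. *)

Definition fobj (R : realFieldType) (n : nat) (c x : nat -> R) : R :=
  2^-1 * (\sum_(1 <= i < n.+1) x i) ^+ 2 - \sum_(1 <= i < n.+1) c i * x i.

Definition Usum (R : realFieldType) (u : nat -> R) (k : nat) : R :=
  \sum_(1 <= i < k.+1) u i.

Definition xk (R : realFieldType) (u : nat -> R) (k : nat) : nat -> R :=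
  fun i => if (i <= k)%N then u i else 0.

Definition Gk (R : realFieldType) (c u : nat -> R) (k : nat) : R :=
  2^-1 * (Usum u k + Usum u k.-1) - c k.

(* Main.v *)
Require Import Defs.
From mathcomp Require Import all_boot all_order all_algebra.
From mathcomp Require Import ring lra zify.
Import Order.TTheory GRing.Theory Num.Theory.
Local Open Scope ring_scope.

Lemma sum_trunc (R : realFieldType) (a : nat -> R) (k n : nat) : (k <= n)%N ->
  \sum_(1 <= i < n.+1) (if (i <= k)%N then a i else 0) = \sum_(1 <= i < k.+1) a i.
Proof.
move=> kn.
rewrite (big_cat_nat _ (n := k.+1)) //=; try lia.
rewrite [X in _ + X = _]big_nat_cond [X in _ + X = _]big1 ?addr0; last first.
  by move=> i /andP[/andP[h1 _] _]; rewrite leqNgt h1.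
by apply: eq_big_nat => i /andP[_ h]; rewrite -ltnS h.
Qed.

Lemma fobj_xk (R : realFieldType) (n : nat) (c u : nat -> R) k : (k <= n)%N ->
  fobj n c (xk u k) = 2^-1 * Usum u k ^+ 2 - \sum_(1 <= i < k.+1) c i * u i.
Proof.
move=> kn; rewrite /fobj /xk /Usum sum_trunc //.
rewrite -(@sum_trunc _ (fun i => c i * u i) _ _ kn).
by congr (_ - _); apply: eq_bigr => i _; case: ifP => _; rewrite ?mulr0.
Qed.

Lemma Usum_rec (R : realFieldType) (u : nat -> R) k :
  Usum u k.+1 = Usum u k + u k.+1.
Proof. by rewrite /Usum big_nat_recr. Qed.

Lemma step (R : realFieldType) (n : nat) (c u : nat -> R) k : (k < n)%N ->
  fobj n c (xk u k.+1) - fobj n c (xk u k) = u k.+1 * Gk c u k.+1.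
Proof.
move=> kn; rewrite !fobj_xk //; last by lia.
rewrite big_nat_recr //= /Gk /= Usum_rec.
by field.
Qed.

Lemma down (R : realFieldType) (F : nat -> R) p :
  (forall j, (j < p)%N -> F j.+1 <= F j) -> forall i, (i <= p)%N -> F p <= F i.
Proof.
elim: p => [|p IH] H i hi.
  by have -> : i = 0%N by lia.
case: (ltnP p i) => h.
  by have -> : i = p.+1 by lia.
apply: le_trans (H p (ltnSn p)) _.
by apply: IH => // j hj; apply: H; lia.
Qed.

Lemma up (R : realFieldType) (F : nat -> R) p n :
  (forall j, (p <= j)%N -> (j < n)%N -> F j <= F j.+1) ->
  forall i, (p <= i <= n)%N -> F p <= F i.
Proof.
move=> H; elim=> [|i IH] hi.
  by have -> : p = 0%N by lia.
case: (ltnP p i.+1) => h.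
  apply: le_trans (IH _) (H i _ _); lia.
by have -> : p = i.+1 by lia.
Qed.

Theorem lemma1 (R : realFieldType) (n : nat) (c u : nat -> R) :
  (1 <= n)%N ->
  (forall i, (1 <= i < n)%N -> c i.+1 <= c i) ->
  0 <= c n ->
  (forall i, (1 <= i <= n)%N -> 0 < u i) ->
  (* (i) *)
  (forall nbar : nat,
     (1 <= nbar <= n)%N ->
     0 <= Gk c u nbar ->
     (forall k, (1 <= k < nbar)%N -> Gk c u k < 0) ->
     forall i, (i <= n)%N ->
       fobj n c (xk u nbar.-1) <= fobj n c (xk u i))
  /\
  (* (ii) *)
  ((forall k, (1 <= k <= n)%N -> Gk c u k < 0) ->
     forall i, (i <= n)%N -> fobj n c (xk u n) <= fobj n c (xk u i)).
Proof.
move=> n1 hc _ hu.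
have Ginc : forall k, (1 <= k < n)%N -> Gk c u k <= Gk c u k.+1.
  move=> k hk; rewrite /Gk /=.
  have hk' : k = k.-1.+1 by lia.
  have e : Usum u k = Usum u k.-1 + u k by rewrite {1}hk' Usum_rec -hk'.
  rewrite Usum_rec e.
  have := hc k hk; have := hu k _; have := hu k.+1 _.
  move=> h1 h2; have a1 := h1 ltac:(lia); have a2 := h2 ltac:(lia); lra.
have Gmono : forall a b, (1 <= a)%N -> (a <= b <= n)%N -> Gk c u a <= Gk c u b.
  move=> a b ha; elim: b => [|b IH] hb; first by lia.
  case: (ltnP a b.+1) => h.
    apply: le_trans (IH _) (Ginc b _); lia.
  by have -> : a = b.+1 by lia.
have stepneg : forall j, (j < n)%N -> Gk c u j.+1 < 0 ->
    fobj n c (xk u j.+1) <= fobj n c (xk u j).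
  move=> j jn hG; have := @step _ n c u j jn; have := hu j.+1 _.
  move=> h; have a := h ltac:(lia) => e.
  rewrite -subr_le0 e; apply: ltW; by rewrite pmulr_rlt0.
have steppos : forall j, (j < n)%N -> 0 <= Gk c u j.+1 ->
    fobj n c (xk u j) <= fobj n c (xk u j.+1).
  move=> j jn hG; have := @step _ n c u j jn; have := hu j.+1 _.
  move=> h; have a := h ltac:(lia) => e.
  rewrite -subr_ge0 e; apply: mulr_ge0 => //; exact: ltW.
split.
  move=> nb hnb hG hlt i hi.
  case: (leqP i nb.-1) => h.
    apply: (@down _ (fun k => fobj n c (xk u k))) => // j hj.
    apply: stepneg; [lia | apply: hlt; lia].
  apply: (@up _ (fun k => fobj n c (xk u k)) nb.-1 n); last by lia.
  move=> j hj jn; apply: steppos => //.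
  apply: le_trans hG (Gmono _ _ _ _); lia.
move=> hlt i hi.
apply: (@down _ (fun k => fobj n c (xk u k))) => // j hj.
apply: stepneg => //; apply: hlt; lia.
Qed.
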